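(* Let $\mathbf A$ be a real symmetric positive definite matrix indexed by the mesh $\mathcal M$, in the FIND setting described in the context. Then for every leaf cluster $\mathcal C_r$ of $\mathcal T$, every consistent ordering of $\mathcal T_r^+$ and every node $g$ of $\mathcal T_r^+$, the matrix $\mathcal U_g=\mathbf A_g(\mathcal B_g,\mathcal B_g)-\mathbf A_g(\mathcal B_g,\mathcal S_g)\mathbf A_g(\mathcal S_g,\mathcal S_g)^{-1}\mathbf A_g(\mathcal S_g,\mathcal B_g)$ is positive definite.
   Context: Setting (FIND). $\mathcal M$ is a finite set of mesh nodes and $\mathbf A$ is a matrix with rows and columns indexed by $\mathcal M$, structurally symmetric ($A_{ij}\neq 0\iff A_{ji}\neq 0$). For a matrix $\mathbf X$ and $X,Y\subseteq\mathcal M$, $\mathbf X(X,Y)$ is the submatrix with rows in $X$ and columns in $Y$. For a cluster $\mathcal C\subseteq\mathcal M$, its boundary set is $\mathcal B_{\mathcal C}=\{i\in\mathcal C: A_{ij}\neq 0\text{ for some } j\notin\mathcal C\}$ and its inner set is $\mathcal I_{\mathcal C}=\mathcal C\setminus\mathcal B_{\mathcal C}$; for a cluster $\mathcal C_g$ write $\mathcal B_g,\mathcal I_g$. Cluster tree: $\mathcal T$ is a rooted binary tree of clusters with root $\mathcal M$, each non-leaf cluster the disjoint union of its two children. For a leaf $\mathcal C_r$, let $r=a_0,\dots,a_d$ be the path to the root and $b_k$ the sibling of $a_k$. The augmented tree $\mathcal T_r^+$ has root $\mathcal C_{-r}=\mathcal M\setminus\mathcal C_r$; for $0\le k\le d-2$,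 $\mathcal C_{-a_k}=\mathcal M\setminus\mathcal C_{a_k}$ has children $\mathcal C_{b_k}$ and $\mathcal C_{-a_{k+1}}$, where $\mathcal C_{-a_{d-1}}$ is identified with $\mathcal C_{b_{d-1}}$ (equal sets); each basic cluster $\mathcal C_{b_k}$ carries its subtree from $\mathcal T$. Private inner nodes: $\mathcal S_g=\mathcal I_g$ for a leaf $g$ of $\mathcal T_r^+$, and $\mathcal S_g=\mathcal I_g\setminus(\mathcal I_i\cup\mathcal I_j)$ if $g$ has children $i,j$. Consistent ordering: a total order $g_1,\dots,g_m$ of the nodes of $\mathcal T_r^+$ with every node after all its descendants. Elimination: $\mathbf A_{g_1}=\mathbf A$; for each $g$, $\mathcal L_g=\mathbf A_g(\mathcal B_g,\mathcal S_g)\mathbf A_g(\mathcal S_g,\mathcal S_g)^{-1}$, $\mathbf L_g$ is the identity on $\mathcal M$ except $\mathbf L_g(\mathcal B_g,\mathcal S_g)=\mathcal L_g$, $\mathbf A_{g+}=\mathbf L_g^{-1}\mathbf A_g$, and $\mathbf A_{g_{t+1}}=\mathbf A_{g_t+}$ (block Gaussian elimination of the columns $\mathcal S_g$). *)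

(* Defs.v *)
From HB Require Import structures.
From mathcomp Require Import all_boot all_order all_algebra.
Set Implicit Arguments. Unset Strict Implicit. Unset Printing Implicit Defensive.
Import Order.TTheory GRing.Theory Num.Theory.
Local Open Scope ring_scope.

(* The mesh M is modelled as 'I_n; matrices indexed by M are 'M[R]_n. *)

Section FIND.
Variable R : realFieldType.
Variable n : nat.

Definition selmx (X : {set 'I_n}) : 'M[R]_(n, #|X|) :=
  \matrix_(i, a) (i == enum_val a)%:R.

(* Submatrix X(Y, Z) (rows in Y, columns in Z, in enumeration order). *)
Definition submxS (Y Z : {set 'I_n}) (X : 'M[R]_n) : 'M[R]_(#|Y|, #|Z|) :=
  \matrix_(a, b) X (enum_val a) (enum_val b).

Definition symmetric_mx (m : nat) (M : 'M[R]_m) : Prop := M^T = M.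

Definition posdef_mx (m : nat) (M : 'M[R]_m) : Prop :=
  forall v : 'cV[R]_m, v != 0 -> 0 < (v^T *m M *m v) 0 0.

Definition bnd (A : 'M[R]_n) (C : {set 'I_n}) : {set 'I_n} :=
  [set i in C | [exists j, (j \notin C) && (A i j != 0)]].
Definition inner (A : 'M[R]_n) (C : {set 'I_n}) : {set 'I_n} := C :\: bnd A C.

Inductive ctree := CLeaf of {set 'I_n} | CNode of {set 'I_n} & ctree & ctree.

Definition cset (t : ctree) : {set 'I_n} :=
  match t with CLeaf C => C | CNode C _ _ => C end.

Fixpoint ctree_wf (t : ctree) : Prop :=
  match t with
  | CLeaf _ => True
  | CNode C l r => [/\ C = cset l :|: cset r, [disjoint cset l & cset r],
                       ctree_wf l & ctree_wf r]
  end.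

Definition cluster_tree (t : ctree) : Prop := cset t = setT /\ ctree_wf t.

(* Nodes are addressed by paths from the root (false = left, true = right). *)
Fixpoint positions (t : ctree) : seq (seq bool) :=
  match t with
  | CLeaf _ => [:: [::]]
  | CNode _ l r => [::] :: (map (cons false) (positions l) ++ map (cons true) (positions r))
  end.

Fixpoint subt (t : ctree) (p : seq bool) : option ctree :=
  match p, t with
  | [::], _ => Some t
  | b :: p', CNode _ l r => subt (if b then r else l) p'
  | _ :: _, CLeaf _ => None
  end.

(* Augmented tree T_r^+ for the leaf of t reached by the path p.
   O is the (already built) tree for C_{-a_{k+1}} (None at the root of T).
   Returns None if p does not address a leaf of t. *)
Fixpoint augT (t : ctree) (p : seq bool) (O : option ctree) : option ctree :=
  match p, t with
  | [::], CLeaf C =>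
      Some (match O with None => CLeaf (~: C) | Some o => o end)
  | b :: p', CNode _ l r =>
      let a := if b then r else l in
      let s := if b then l else r in
      augT a p' (Some (match O with
                       | None => s   (* C_{-a_{d-1}} identified with C_{b_{d-1}} *)
                       | Some o => CNode (~: cset a) s o
                       end))
  | _, _ => None
  end.

Definition augmented_tree (t : ctree) (p : seq bool) : option ctree := augT t p None.

Definition consistent_ordering (tr : ctree) (ord : seq (seq bool)) : Prop :=
  perm_eq ord (positions tr) /\
  forall g h, g \in positions tr -> h \in positions tr ->
    prefix g h -> g != h -> (index h ord < index g ord)%N.

Definition clus (tr : ctree) (g : seq bool) : {set 'I_n} :=
  match subt tr g with Some t => cset t | None => set0 end.

Definition Bset (A : 'M[R]_n) (tr : ctree) (g : seq bool) := bnd A (clus tr g).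

Definition Sset (A : 'M[R]_n) (tr : ctree) (g : seq bool) : {set 'I_n} :=
  match subt tr g with
  | Some (CLeaf C) => inner A C
  | Some (CNode C l r) => inner A C :\: (inner A (cset l) :|: inner A (cset r))
  | None => set0
  end.

Definition Lsmall (A : 'M[R]_n) (tr : ctree) (g : seq bool) (X : 'M[R]_n)
  : 'M[R]_(#|Bset A tr g|, #|Sset A tr g|) :=
  submxS (Bset A tr g) (Sset A tr g) X *m invmx (submxS (Sset A tr g) (Sset A tr g) X).

Definition Lmat (A : 'M[R]_n) (tr : ctree) (g : seq bool) (X : 'M[R]_n) : 'M[R]_n :=
  \matrix_(i, j)
    if (i \in Bset A tr g) && (j \in Sset A tr g)
    then (selmx (Bset A tr g) *m Lsmall A tr g X *m (selmx (Sset A tr g))^T) i j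
    else (i == j)%:R.

Definition elim_step (A : 'M[R]_n) (tr : ctree) (X : 'M[R]_n) (g : seq bool) : 'M[R]_n :=
  invmx (Lmat A tr g X) *m X.

(* A_{g_t}: the matrix before eliminating the t-th node of the ordering. *)
Definition Acur (A : 'M[R]_n) (tr : ctree) (ord : seq (seq bool)) (t : nat) : 'M[R]_n :=
  foldl (elim_step A tr) A (take t ord).

Definition Ug (A : 'M[R]_n) (tr : ctree) (g : seq bool) (X : 'M[R]_n)
  : 'M[R]_(#|Bset A tr g|) :=
  let B := Bset A tr g in let S := Sset A tr g in
  submxS B B X - submxS B S X *m invmx (submxS S S X) *m submxS S B X.

End FIND.

(* Main.v *)
Require Import Defs.
From HB Require Import structures.
From mathcomp Require Import all_boot all_order all_algebra.
Set Implicit Arguments. Unset Strict Implicit. Unset Printing Implicit Defensive.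
Import Order.TTheory GRing.Theory Num.Theory.
Local Open Scope ring_scope.

Section MxAux.
Variable R : realFieldType.
Variable n : nat.
Local Notation M := 'M[R]_n.
Implicit Types X Y Z : {set 'I_n}.

Definition proj (X : {set 'I_n}) : M := \matrix_(i, j) ((i == j) && (i \in X))%:R.

Lemma sum_delta (F : 'I_n -> R) k : \sum_i (i == k)%:R * F i = F k.
Proof.
rewrite (bigD1 k) //= eqxx mul1r big1 ?addr0 // => i /negbTE ->; by rewrite mul0r.
Qed.

Lemma mul_projmx m X (Y : 'M[R]_(n, m)) i j : (proj X *m Y) i j = (i \in X)%:R * Y i j.
Proof.
rewrite mxE (bigD1 i) //= big1 ?addr0; first by rewrite mxE eqxx.
by move=> k /negbTE nk; rewrite mxE eq_sym nk mul0r.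
Qed.

Lemma mul_mxproj m X (Y : 'M[R]_(m, n)) i j : (Y *m proj X) i j = Y i j * (j \in X)%:R.
Proof.
rewrite mxE (bigD1 j) //= big1 ?addr0; first by rewrite mxE eqxx.
by move=> k /negbTE nk; rewrite mxE nk mulr0.
Qed.

Lemma tr_proj X : (proj X)^T = proj X.
Proof. by apply/matrixP=> i j; rewrite !mxE eq_sym; case: eqP => // ->. Qed.

Lemma projM X Y : proj X *m proj Y = proj (X :&: Y).
Proof.
apply/matrixP=> i j; rewrite mul_projmx !mxE inE.
by case: (i \in X); case: eqP => // _; rewrite ?mul1r ?mul0r.
Qed.

Lemma proj0 : proj set0 = 0.
Proof. by apply/matrixP=> i j; rewrite !mxE inE andbF. Qed.

Lemma projT : proj setT = 1%:M.
Proof. by apply/matrixP=> i j; rewrite !mxE inE andbT. Qed.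

Lemma selmxE X i a : selmx R X i a = (i == enum_val a)%:R.
Proof. by rewrite mxE. Qed.

Lemma sel_tr_sel X : (selmx R X)^T *m selmx R X = 1%:M.
Proof.
apply/matrixP=> a b; rewrite mxE.
under eq_bigr do rewrite !mxE.
rewrite (bigD1 (enum_val a)) //= eqxx mul1r big1 ?addr0.
  by rewrite !mxE (inj_eq enum_val_inj) eq_sym.
by move=> k /negbTE nk; rewrite nk mul0r.
Qed.

Lemma sel_sel_tr X : selmx R X *m (selmx R X)^T = proj X.
Proof.
apply/matrixP=> i j; rewrite mxE !mxE.
under eq_bigr do rewrite !mxE.
case: (boolP (i \in X)) => iX; last first.
  rewrite andbF big1 // => a _.
  by case: eqP => [ei|_]; [rewrite ei enum_valP in iX | rewrite mul0r].
rewrite andbT (bigD1 (enum_rank_in iX i)) //= enum_rankK_in // eqxx mul1r.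
rewrite big1 ?addr0 1?eq_sym // => a na.
case: eqP => [ei|]; rewrite ?mul0r //.
by case/eqP: na; apply: enum_val_inj; rewrite enum_rankK_in.
Qed.

Lemma proj_sel X Y : X \subset Y -> proj Y *m selmx R X = selmx R X.
Proof.
move=> sXY; apply/matrixP=> i a; rewrite mul_projmx mxE.
case: eqP => [->|]; last by rewrite mulr0.
by rewrite (subsetP sXY _ (enum_valP a)) mul1r.
Qed.

Lemma sel_tr_proj X Y : X \subset Y -> (selmx R X)^T *m proj Y = (selmx R X)^T.
Proof. by move=> sXY; rewrite -tr_proj -trmx_mul proj_sel. Qed.

Lemma sum_deltar (F : 'I_n -> R) k : \sum_i F i * (i == k)%:R = F k.
Proof. by rewrite -[RHS]sum_delta; apply: eq_bigr => i _; rewrite mulrC. Qed.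

Lemma submxSE Y Z (X0 : M) : submxS Y Z X0 = (selmx R Y)^T *m X0 *m selmx R Z.
Proof.
apply/matrixP=> a b; rewrite [RHS]mxE.
rewrite (eq_bigr (fun k => ((selmx R Y)^T *m X0) a k * (k == enum_val b)%:R)); last first.
  by move=> k _; rewrite [selmx R Z k b]mxE.
rewrite sum_deltar [((selmx R Y)^T *m X0) _ _]mxE.
rewrite (eq_bigr (fun k => (k == enum_val a)%:R * X0 k (enum_val b))); last first.
  by move=> k _; rewrite [(selmx R Y)^T a k]mxE [selmx R Y k a]mxE.
by rewrite sum_delta mxE.
Qed.

Lemma sel_disj X Y : [disjoint X & Y] -> (selmx R X)^T *m selmx R Y = 0.
Proof.
move=> dXY; apply/matrixP=> a b; rewrite [RHS]mxE mxE.
rewrite (eq_bigr (fun k => (k == enum_val a)%:R * (k == enum_val b)%:R)); last first.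
  by move=> k _; rewrite !mxE.
rewrite sum_delta; case: eqP => // e.
by have := disjointFr dXY (enum_valP a); rewrite e enum_valP.
Qed.

Lemma sel_row0 m X (W : 'M[R]_(#|X|, m)) i k : i \notin X -> (selmx R X *m W) i k = 0.
Proof.
move=> iX; rewrite mxE big1 // => a _; rewrite mxE.
by case: eqP => [ei|_]; [rewrite ei enum_valP in iX | rewrite mul0r].
Qed.

Lemma sel_col0 m X (W : 'M[R]_(m, #|X|)) i k : k \notin X -> (W *m (selmx R X)^T) i k = 0.
Proof.
move=> kX; rewrite mxE big1 // => a _; rewrite !mxE.
by case: eqP => [ei|_]; [rewrite ei enum_valP in kX | rewrite mulr0].
Qed.

End MxAux.

Section Step.
Variable R : realFieldType.
Variable n : nat.
Local Notation M := 'M[R]_n.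
Implicit Types X Y Z B S D Q : {set 'I_n}.

Definition Lsm B S (X0 : M) := submxS B S X0 *m invmx (submxS S S X0).
Definition Ncorr B S (X0 : M) : M := selmx R B *m Lsm B S X0 *m (selmx R S)^T.
Definition Lg B S (X0 : M) : M := \matrix_(i, j)
  if (i \in B) && (j \in S) then Ncorr B S X0 i j else (i == j)%:R.
Definition UgE B S (X0 : M) := submxS B B X0 - submxS B S X0 *m invmx (submxS S S X0) *m submxS S B X0.

Variables (B S : {set 'I_n}) (X0 : M).
Hypothesis dBS : [disjoint B & S].
Local Notation N := (Ncorr B S X0).

Lemma N_row0 i k : i \notin B -> N i k = 0.
Proof. by move=> iB; rewrite /Ncorr -mulmxA sel_row0. Qed.

Lemma N_col0 i k : k \notin S -> N i k = 0.
Proof. by move=> kS; rewrite /Ncorr sel_col0. Qed.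

Lemma Lg_eq : Lg B S X0 = 1%:M + N.
Proof.
apply/matrixP=> i j; rewrite [LHS]mxE [RHS]mxE [_%:M _ _]mxE.
case: (boolP (i \in B)) => iB /=; last by rewrite N_row0 // addr0.
case: (boolP (j \in S)) => jS /=; last by rewrite N_col0 // addr0.
case: eqP => [eij|]; last by rewrite add0r.
by have := disjointFr dBS iB; rewrite eij jS.
Qed.

Lemma NN : N *m N = 0.
Proof.
have h : (selmx R S)^T *m N = 0.
  by rewrite /Ncorr !mulmxA sel_disj 1?disjoint_sym // !mul0mx.
by rewrite {1}/Ncorr -mulmxA h mulmx0.
Qed.

Lemma invLg : invmx (Lg B S X0) = 1%:M - N.
Proof.
have e : Lg B S X0 *m (1%:M - N) = 1%:M.
  by rewrite Lg_eq mulmxDl mul1mx mulmxBr mulmx1 NN subr0 subrK.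
have [u _] := mulmx1_unit e.
transitivity (invmx (Lg B S X0) *m (Lg B S X0 *m (1%:M - N))).
  by rewrite e mulmx1.
by rewrite mulmxA mulVmx // mul1mx.
Qed.

Lemma Y_eq : invmx (Lg B S X0) *m X0 = X0 - N *m X0.
Proof. by rewrite invLg mulmxBl mul1mx. Qed.

Lemma Ug_Y : UgE B S X0 = submxS B B (invmx (Lg B S X0) *m X0).
Proof.
rewrite Y_eq [submxS B B (_ - _)]submxSE mulmxBr mulmxBl -submxSE; congr (_ - _).
rewrite /Ncorr !mulmxA sel_tr_sel mul1mx.
by rewrite (submxSE S B) /Lsm !mulmxA.
Qed.

Lemma Y_entry i j : (invmx (Lg B S X0) *m X0) i j = X0 i j - \sum_k N i k * X0 k j.
Proof. by rewrite Y_eq mxE; congr (_ + _); rewrite mxE mxE. Qed.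

Lemma Y_rowB i j : i \notin B -> (invmx (Lg B S X0) *m X0) i j = X0 i j.
Proof.
by move=> iB; rewrite Y_entry big1 ?subr0 // => k _; rewrite N_row0 // mul0r.
Qed.

Lemma Y_colS i j : (forall k, k \in S -> X0 k j = 0) ->
  (invmx (Lg B S X0) *m X0) i j = X0 i j.
Proof.
move=> H; rewrite Y_entry big1 ?subr0 // => k _.
by case: (boolP (k \in S)) => kS; [rewrite H ?mulr0 | rewrite N_col0 ?mul0r].
Qed.

Lemma N_projS : N *m proj R S = N.
Proof. by rewrite /Ncorr -mulmxA sel_tr_proj. Qed.

Lemma NXproj : submxS S S X0 \in unitmx ->
  N *m X0 *m proj R S = proj R B *m X0 *m proj R S.
Proof.
move=> u; rewrite -!sel_sel_tr /Ncorr /Lsm.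
rewrite !mulmxA -[_ *m (selmx R S)^T *m X0 *m selmx R S](mulmxA _ _ (selmx R S)).
rewrite -[_ *m (selmx R S)^T *m (X0 *m selmx R S)](mulmxA _ _ (X0 *m selmx R S)).
rewrite [(selmx R S)^T *m (X0 *m selmx R S)]mulmxA -submxSE.
rewrite -[selmx R B *m submxS B S X0 *m invmx _ *m submxS S S X0](mulmxA _ (invmx _)).
rewrite mulVmx // mulmx1 submxSE !mulmxA //.
Qed.

End Step.

Section PD.
Variable R : realFieldType.
Variable n : nat.
Local Notation M := 'M[R]_n.
Implicit Types X Y Z B S D Q : {set 'I_n}.

Lemma projC X : proj R (~: X) = 1%:M - proj R X.
Proof.
apply/matrixP=> i j; rewrite !mxE inE.
by case: eqP => [->|]; case: (j \in X); rewrite ?subrr ?subr0.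
Qed.

Lemma proj_zero (X0 : M) D : (forall i j, i \in D -> j \notin D -> X0 i j = 0) ->
  proj R D *m X0 *m proj R (~: D) = 0.
Proof.
move=> H; apply/matrixP=> i j; rewrite mul_mxproj mul_projmx mxE inE.
case: (boolP (i \in D)) => iD; last by rewrite !mul0r.
case: (boolP (j \in D)) => jD; first by rewrite mulr0.
by rewrite H // mulr0 mul0r.
Qed.

Lemma pd_sub (A X0 P : M) D Q : posdef_mx A ->
  proj R D *m X0 = proj R D *m P *m A -> proj R D *m P *m proj R D = proj R D ->
  (forall i j, i \in D -> j \notin D -> X0 i j = 0) -> Q \subset D ->
  posdef_mx (submxS Q Q X0).
Proof.
move=> pdA H1 H2 HZ sQD v nv.
set u := selmx R Q *m v.
have Pu : proj R D *m u = u by rewrite /u mulmxA proj_sel.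
have e1 : v^T *m submxS Q Q X0 *m v = u^T *m X0 *m u.
  by rewrite submxSE /u trmx_mul !mulmxA.
have Ev : (selmx R Q)^T *m u = v by rewrite /u mulmxA sel_tr_sel mul1mx.
clearbody u.
have Pu' : u^T *m proj R D = u^T by have := congr1 trmx Pu; rewrite trmx_mul tr_proj.
set w := P^T *m u.
have Ew : w = P^T *m u by [].
clearbody w.
have Pw : proj R D *m w = u.
  have := congr1 trmx H2; rewrite !trmx_mul !tr_proj mulmxA => H2'.
  by rewrite Ew -{1}Pu !mulmxA H2' Pu.
have e2 : proj R D *m X0 *m u = proj R D *m X0 *m w.
  have -> : w = proj R D *m w + proj R (~: D) *m w by rewrite projC mulmxBl mul1mx addrC subrK.
  by rewrite mulmxDr Pw mulmxA proj_zero // mul0mx addr0.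
have e3 : u^T *m X0 *m u = w^T *m A *m w.
  rewrite -Pu' -!mulmxA [proj R D *m (X0 *m u)]mulmxA e2 H1 !mulmxA Pu'.
  by rewrite Ew trmx_mul trmxK.
rewrite e1 e3; apply: pdA; apply: contraNneq nv => w0.
by rewrite -Ev -Pw w0 !mulmx0.
Qed.

Lemma pd_unit m (K : 'M[R]_m) : posdef_mx K -> K \in unitmx.
Proof.
move=> pd; rewrite unitmxE unitfE; apply/negP => /det0P [v nv vK].
suff : v^T != 0 by move/pd; rewrite trmxK vK mul0mx mxE ltxx.
by apply: contraNneq nv => e; rewrite -[v]trmxK e trmx0.
Qed.

End PD.

Section InvStep.
Variable R : realFieldType.
Variable n : nat.
Local Notation M := 'M[R]_n.
Implicit Types X Y Z B S D Q : {set 'I_n}.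

Lemma proj_sub X Y : X \subset Y -> proj R X = proj R X *m proj R Y.
Proof. by move=> sXY; rewrite projM (setIidPl sXY). Qed.

Lemma proj_sub' X Y : X \subset Y -> proj R X = proj R Y *m proj R X.
Proof. by move=> sXY; rewrite projM setIC (setIidPl sXY). Qed.

Lemma inv_step (A X0 P : M) B S D :
  [disjoint B & S] -> S \subset D ->
  proj R D *m X0 = proj R D *m P *m A -> proj R D *m P *m proj R D = proj R D ->
  (forall i j, i \in D -> j \notin D -> X0 i j = 0) ->
  (forall i j, i \in D -> i \notin S -> i \notin B -> j \in S -> X0 i j = 0) ->
  submxS S S X0 \in unitmx ->
  exists P' : M,
   [/\ proj R (D :\: S) *m (invmx (Lg B S X0) *m X0) = proj R (D :\: S) *m P' *m A,
       proj R (D :\: S) *m P' *m proj R (D :\: S) = proj R (D :\: S) &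
       forall i j, i \in D :\: S -> j \notin D :\: S -> (invmx (Lg B S X0) *m X0) i j = 0].
Proof.
move=> dBS sSD H1 H2 HZ Hst u.
set Nm := Ncorr B S X0.
have NpS : Nm *m proj R S = Nm := N_projS B S X0.
have Yeq : invmx (Lg B S X0) *m X0 = X0 - Nm *m X0 := Y_eq X0 dBS.
have NXp : Nm *m X0 *m proj R S = proj R B *m X0 *m proj R S := NXproj B u.
clearbody Nm.
have sD'D : D :\: S \subset D by apply: subsetDl.
have NX : Nm *m X0 = Nm *m P *m A.
  rewrite -NpS (proj_sub sSD) -!mulmxA H1.
  by rewrite !mulmxA.
have D'X : proj R (D :\: S) *m X0 = proj R (D :\: S) *m P *m A.
  by rewrite (proj_sub sD'D) -!mulmxA H1 !mulmxA.
have L1 : forall (Z : M) X Y, X \subset Y -> Z *m proj R X *m proj R Y = Z *m proj R X.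
  by move=> Z X Y sXY; rewrite -mulmxA -proj_sub.
have L2 : forall (Z : M) X Y, X \subset Y -> Z *m proj R Y *m proj R X = Z *m proj R X.
  by move=> Z X Y sXY; rewrite -mulmxA -proj_sub'.
have PD' : proj R (D :\: S) *m P *m proj R (D :\: S) = proj R (D :\: S).
  transitivity (proj R (D :\: S) *m (proj R D *m P *m proj R D) *m proj R (D :\: S)).
    by rewrite !mulmxA -(proj_sub sD'D) (L2 _ _ _ sD'D).
  by rewrite H2 -(proj_sub sD'D) projM setIid.
have NPD' : Nm *m P *m proj R (D :\: S) = 0.
  transitivity (Nm *m proj R S *m (proj R D *m P *m proj R D) *m proj R (D :\: S)).
    by rewrite !mulmxA (L1 _ _ _ sSD) (L2 _ _ _ sD'D) NpS.
  rewrite H2 (L1 _ _ _ sSD) -mulmxA projM.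
  have -> : S :&: (D :\: S) = set0.
    by apply/setP => x; rewrite !inE; case: (x \in S); rewrite ?andbF.
  by rewrite proj0 mulmx0.
exists ((1%:M - Nm) *m P); split.
- by rewrite Yeq mulmxBr NX D'X mulmxBl mul1mx mulmxBr mulmxBl !mulmxA.
- by rewrite mulmxBl mul1mx mulmxBr mulmxBl PD' -mulmxA NPD' mulmx0 subr0.
move=> i j; rewrite !inE negb_and negbK => /andP [iS iD] jD'.
case: (boolP (j \in D)) => jD; last first.
  rewrite (Y_colS dBS); first by rewrite HZ.
  by move=> k kS; rewrite HZ // (subsetP sSD).
rewrite jD orbF in jD'.
case: (boolP (i \in B)) => iB; last by rewrite (Y_rowB _ dBS) // Hst.
have := congr1 (fun M0 : 'M[R]_n => M0 i j) NXp; rewrite /=.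
rewrite !mul_mxproj !mul_projmx jD' iB mulr1 mul1r mulr1 => e.
by rewrite Yeq mxE mxE e subrr.
Qed.

End InvStep.

Section Tree.
Variable R : realFieldType.
Variable n : nat.
Variable A : 'M[R]_n.
Implicit Types (t s tr : ctree n) (g h q : seq bool).

Definition Sloc (s : ctree n) : {set 'I_n} :=
  match s with
  | CLeaf C => inner A C
  | CNode C l r => inner A C :\: (inner A (cset l) :|: inner A (cset r))
  end.

Lemma SsetE tr g : Sset A tr g = if subt tr g is Some s then Sloc s else set0.
Proof. by rewrite /Sset; case: (subt tr g) => // -[]. Qed.

Lemma clusE tr g : clus tr g = if subt tr g is Some s then cset s else set0.
Proof. by []. Qed.

Lemma subt_cat t g q : subt t (g ++ q) = obind (fun s => subt s q) (subt t g).
Proof.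
elim: g t => [|b g IH] [C|C l r] //=.
Qed.

Lemma mem_map_cons (b c : bool) h (s : seq (seq bool)) :
  (b :: h \in map (cons c) s) = (b == c) && (h \in s).
Proof.
apply/mapP/andP => [[h' hs [-> ->]]|[/eqP -> hs]]; last by exists h.
by [].
Qed.

Lemma mem_positions t h : (h \in positions t) = isSome (subt t h).
Proof.
elim: t h => [C|C l IHl r IHr] [|b h] //=.
by rewrite in_cons mem_cat !mem_map_cons /=; case: b => /=; rewrite ?IHl ?IHr ?orbF.
Qed.

Lemma uniq_positions t : uniq (positions t).
Proof.
elim: t => [C|C l IHl r IHr] //=.
rewrite mem_cat negb_or cat_uniq !map_inj_uniq ?IHl ?IHr; try by move=> x y [].
apply/and4P; split=> //.
- by apply/andP; split; apply/negP => /mapP [y _ e].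
apply/hasPn => x /mapP [y _ ->]; by apply/negP => /mapP [z _ e].
Qed.

Lemma subt_nil t : subt t [::] = Some t.
Proof. by case: t. Qed.

Lemma wf_subt t g s : ctree_wf t -> subt t g = Some s -> ctree_wf s.
Proof.
elim: g t => [|b g IH] t; first by rewrite subt_nil => w [<-].
case: t => // C l r [_ _ wl wr]; case: b; [exact: IH wr | exact: IH wl].
Qed.

Lemma sub_subt t g s : ctree_wf t -> subt t g = Some s -> cset s \subset cset t.
Proof.
elim: g t => [|b g IH] t; first by rewrite subt_nil => w [<-].
case: t => // C l r [-> _ wl wr]; case: b => /= e.
  exact: subset_trans (IH _ wr e) (subsetUr _ _).
exact: subset_trans (IH _ wl e) (subsetUl _ _).
Qed.

Lemma rel_subt t g h sg sh : ctree_wf t -> subt t g = Some sg -> subt t h = Some sh ->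
  [|| prefix g h, prefix h g | [disjoint cset sg & cset sh]].
Proof.
elim: g t h => [|b g IH] t h; first by rewrite prefix0s.
case: h => [|b' h]; first by rewrite prefix0s orbT.
case: t => // C l r /= [_ dlr wl wr] eg eh.
case: (boolP (b == b')) => [/eqP e|nbb] /=.
  subst b'; rewrite !eqxx /=.
  by case: b eg eh => eg eh; [exact: IH wr eg eh | exact: IH wl eg eh].
rewrite eq_sym (negbTE nbb) /=.
have wb : forall c : bool, ctree_wf (if c then r else l) by case.
have sg_ := sub_subt (wb b) eg.
have sh_ := sub_subt (wb b') eh.
have {}dlr : [disjoint cset (if b then r else l) & cset (if b' then r else l)].
  by case: b b' nbb {eg eh sg_ sh_} => -[] //= _; rewrite disjoint_sym.
by rewrite (disjointWl sg_ (disjointWr sh_ dlr)).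
Qed.

Lemma inner_sub C : inner A C \subset C.
Proof. exact: subsetDl. Qed.

Lemma bnd_sub C : bnd A C \subset C.
Proof. by apply/subsetP => x; rewrite inE => /andP []. Qed.

Lemma inner_bnd C : [disjoint bnd A C & inner A C].
Proof.
rewrite -setI_eq0; apply/eqP/setP => x.
by rewrite inE [x \in inner _ _]inE in_set0; case: (x \in bnd A C).
Qed.

Lemma inner_mono (X Y : {set 'I_n}) : X \subset Y -> inner A X \subset inner A Y.
Proof.
move=> sXY; apply/subsetP => x; rewrite !inE negb_and => /andP [h xX].
rewrite (subsetP sXY _ xX) andbT; move: h; rewrite xX /=.
apply: contra => /existsP [j /andP [jY Ajx]]; apply/existsP; exists j.
by rewrite Ajx andbT; exact: contra (subsetP sXY j) jY.
Qed.

Lemma Sloc_inner s : Sloc s \subset inner A (cset s).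
Proof. by case: s => [C|C l r] //=; apply: subsetDl. Qed.

Lemma inner_Sloc s j : j \in inner A (cset s) -> exists q s', subt s q = Some s' /\ j \in Sloc s'.
Proof.
elim: s => [C|C l IHl r IHr] /= hj; first by exists [::], (CLeaf C).
case: (boolP (j \in inner A (cset l))) => [/IHl [q [s' [e js]]]|jl].
  by exists (false :: q), s'.
case: (boolP (j \in inner A (cset r))) => [/IHr [q [s' [e js]]]|jr].
  by exists (true :: q), s'.
by exists [::], (CNode C l r); split => //=; rewrite in_setD in_setU negb_or jl jr.
Qed.

Lemma Sloc_disj_pre t g q sg sh : ctree_wf t -> q != [::] ->
  subt t g = Some sg -> subt t (g ++ q) = Some sh -> [disjoint Sloc sg & Sloc sh].
Proof.
move=> w; case: q => [|b q] // _ eg; rewrite subt_cat eg /=.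
have wg := wf_subt w eg.
case: sg wg {eg} => [C _ e|C l r [_ _ wl wr] eh]; first by discriminate e.
have sh_ : cset sh \subset cset (if b then r else l).
  by case: b eh => eh; [exact: sub_subt wr eh | exact: sub_subt wl eh].
apply: disjointWr (subset_trans (Sloc_inner sh) (inner_mono sh_)) _.
rewrite /Sloc -setI_eq0; apply/eqP/setP => x; rewrite in_setI in_setD in_setU in_set0.
by case: b {eh sh_} => /=; case: (x \in inner A (cset l)); case: (x \in inner A (cset r));
  rewrite /= ?andbF.
Qed.

Lemma Sloc_disj t g h sg sh : ctree_wf t -> g != h ->
  subt t g = Some sg -> subt t h = Some sh -> [disjoint Sloc sg & Sloc sh].
Proof.
move=> w ngh eg eh.
case/or3P: (rel_subt w eg eh) => [/prefixP [q e]|/prefixP [q e]|d].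
- have eh' : subt t (g ++ q) = Some sh by rewrite -e.
  apply: (Sloc_disj_pre w _ eg eh').
  by apply: contra ngh => /eqP q0; rewrite e q0 cats0.
- have eg' : subt t (h ++ q) = Some sg by rewrite -e.
  rewrite disjoint_sym; apply: (Sloc_disj_pre w _ eh eg').
  by apply: contra ngh => /eqP q0; rewrite e q0 cats0.
exact: disjointWl (subset_trans (Sloc_inner _) (inner_sub _))
  (disjointWr (subset_trans (Sloc_inner _) (inner_sub _)) d).
Qed.

End Tree.

Section Aug.
Variable n : nat.

Lemma aug_sets (a s : {set 'I_n}) :
  [disjoint a & s] -> ~: a = s :|: ~: (a :|: s) /\ [disjoint s & ~: (a :|: s)].
Proof.
move=> d; split.
  apply/setP => x; rewrite !inE; case xa: (x \in a); case xs: (x \in s) => //=.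
  by rewrite (disjointFr d xa) in xs.
rewrite -setI_eq0; apply/eqP/setP => x; rewrite !inE.
by case: (x \in s); rewrite ?andbF ?orbT.
Qed.

Lemma aug_top (a s : {set 'I_n}) :
  [disjoint a & s] -> a :|: s = setT -> s = ~: a.
Proof.
move=> d e; apply/setP => x; rewrite !inE.
have := congr1 (fun X : {set 'I_n} => x \in X) e; rewrite !inE /=.
case xa: (x \in a); case xs: (x \in s) => //=.
by rewrite (disjointFr d xa) in xs.
Qed.

Lemma aug_stepO (a s : ctree n) C O : ctree_wf s ->
  [disjoint cset a & cset s] -> C = cset a :|: cset s ->
  (if O is Some o then ctree_wf o /\ cset o = ~: C else C = setT) ->
  let o' := match O with None => s | Some o => CNode (~: cset a) s o end in
  ctree_wf o' /\ cset o' = ~: cset a.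
Proof.
move=> ws das eas; case: O => [o [wo eo]|eT] /=.
  rewrite eo eas; have [e1 e2] := aug_sets das.
  by split => //; split.
by split => //; apply: aug_top das _; rewrite -eas.
Qed.

Lemma augT_wf (T : ctree n) p O tr : ctree_wf T ->
  (if O is Some o then ctree_wf o /\ cset o = ~: cset T else cset T = setT) ->
  augT T p O = Some tr -> ctree_wf tr.
Proof.
elim: p T O => [|b p IH] T O.
  case: T => [C|C l r] //= _; case: O => [o [wo _]|_] /= [<-] //.
case: T => [C|C l r] //= [eC dlr wl wr] hO.
case: b; apply: IH => //; apply: aug_stepO => //.
- by rewrite disjoint_sym.
- by rewrite setUC -eC.
- by rewrite -eC.
Qed.

End Aug.

Section Main.
Variable R : realFieldType.
Variable n : nat.
Variables (A : 'M[R]_n) (Tp : ctree n) (ord : seq (seq bool)).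
Hypothesis symA : symmetric_mx A.
Hypothesis pdA : posdef_mx A.
Hypothesis wfTp : ctree_wf Tp.
Hypothesis cons : consistent_ordering Tp ord.

Definition Et t : {set 'I_n} := [set i | has (fun g => i \in Sset A Tp g) (take t ord)].
Local Notation X t := (Acur A Tp ord t).
Local Notation D t := (~: Et t).

Definition Inv t :=
  [/\ exists P : 'M[R]_n, proj R (D t) *m X t = proj R (D t) *m P *m A /\
                 proj R (D t) *m P *m proj R (D t) = proj R (D t),
      (forall i j, i \in D t -> j \notin D t -> X t i j = 0) &
      (forall u, (t <= u < size ord)%N -> forall i j,
          i \notin clus Tp (nth [::] ord u) -> j \in inner A (clus Tp (nth [::] ord u)) ->
          X t i j = 0)].

Lemma uord : uniq ord.
Proof. by rewrite (perm_uniq cons.1) uniq_positions. Qed.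

Lemma memord g : (g \in ord) = (g \in positions Tp).
Proof. exact: (perm_mem cons.1 g). Qed.

Lemma ord_subt g : g \in ord -> exists s, subt Tp g = Some s.
Proof. by rewrite memord mem_positions; case: (subt Tp g) => // s _; exists s. Qed.

Lemma subt_ord g s : subt Tp g = Some s -> g \in ord.
Proof. by rewrite memord mem_positions => ->. Qed.

Lemma ordering g h : g \in ord -> h \in ord -> prefix g h -> g != h ->
  (index h ord < index g ord)%N.
Proof. by rewrite !memord; exact: cons.2. Qed.

Lemma clus_eq g s : subt Tp g = Some s -> clus Tp g = cset s.
Proof. by rewrite /clus => ->. Qed.

Lemma Sset_eq g s : subt Tp g = Some s -> Sset A Tp g = Sloc A s.
Proof. by rewrite SsetE => ->. Qed.

Lemma in_Et t i : reflect (exists2 h, h \in take t ord & i \in Sset A Tp h) (i \in Et t).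
Proof. by rewrite inE; apply: hasP. Qed.

Lemma in_take_ord t h : (h \in take t ord) = (h \in ord) && (index h ord < t)%N.
Proof.
case: (boolP (h \in ord)) => hin /=; first by rewrite in_take.
by apply/negP => /mem_take; rewrite (negbTE hin).
Qed.

Lemma Xstep t : (t < size ord)%N -> X t.+1 =
  invmx (Lg (Bset A Tp (nth [::] ord t)) (Sset A Tp (nth [::] ord t)) (X t)) *m X t.
Proof. by move=> lt; rewrite /Acur (take_nth [::] lt) foldl_rcons. Qed.

Lemma Estep t : (t < size ord)%N -> Et t.+1 = Et t :|: Sset A Tp (nth [::] ord t).
Proof.
by move=> lt; apply/setP => i; rewrite !inE (take_nth [::] lt) has_rcons orbC.
Qed.

Lemma inv0 : Inv 0.
Proof.
have E0 : Et 0 = set0 by apply/setP => i; rewrite !inE take0.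
rewrite /Inv E0 setC0; split.
- by exists 1%:M; rewrite projT !mul1mx /Acur take0.
- by move=> i j _; rewrite inE.
move=> u _ i j iC jI; rewrite /Acur take0 /=.
rewrite -symA mxE; move: jI; rewrite !inE negb_and => /andP [+ jC].
rewrite jC /= => nex; apply/eqP; apply: contraNT nex => nz.
by apply/existsP; exists i; rewrite iC nz.
Qed.

Section StepT.
Variable t : nat.
Hypothesis lt : (t < size ord)%N.
Hypothesis I : Inv t.
Let g := nth [::] ord t.
Let gin : g \in ord := mem_nth [::] lt.
Let ig : index g ord = t := index_uniq [::] lt uord.

Lemma step_all : Inv t.+1 /\ posdef_mx (Ug A Tp g (X t)).
Proof.
have [sg eg] := ord_subt gin.
have cg := clus_eq eg; have Sg := Sset_eq eg.
have Bg : Bset A Tp g = bnd A (cset sg) by rewrite /Bset cg.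
case: I => [[P [H1 H2]] HZ HI].
have dBS : [disjoint Bset A Tp g & Sset A Tp g].
  by rewrite Bg Sg; apply: disjointWr (Sloc_inner A sg) (inner_bnd A (cset sg)).
have sSD : Sset A Tp g \subset D t.
  apply/subsetP => k kS; rewrite inE; apply/in_Et => -[h].
  rewrite in_take_ord => /andP [hin ih] kSh.
  have [sh eh] := ord_subt hin.
  have ngh : g != h by apply: contraTneq ih => <-; rewrite ig ltnn.
  have := Sloc_disj A wfTp ngh eg eh; rewrite -Sg -(Sset_eq eh).
  by move/disjointFr => /(_ k kS); rewrite kSh.
have sBD : Bset A Tp g \subset D t.
  apply/subsetP => k kB; rewrite inE; apply/in_Et => -[h].
  rewrite in_take_ord => /andP [hin ih] kSh.
  have [sh eh] := ord_subt hin.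
  rewrite (Sset_eq eh) in kSh; rewrite Bg in kB.
  case/or3P: (rel_subt wfTp eg eh) => [/prefixP [q e]|/prefixP [q e]|d].
  - move: eh; rewrite e subt_cat eg /= => eh.
    have ss := sub_subt (wf_subt wfTp eg) eh.
    have := subsetP (subset_trans (Sloc_inner A sh) (inner_mono A ss)) k kSh.
    by rewrite (disjointFr (inner_bnd A (cset sg)) kB).
  - have ngh : h != g by apply: contraTneq ih => ->; rewrite ig ltnn.
    have := ordering hin gin (_ : prefix h g) ngh; rewrite e prefix_prefix => /(_ isT).
    rewrite -e ig => lt2; have := ltn_trans lt2 ih; by rewrite ltnn.
  - have kg := subsetP (bnd_sub A (cset sg)) k kB.
    have kh := subsetP (subset_trans (Sloc_inner A sh) (inner_sub A (cset sh))) k kSh.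
    by rewrite (disjointFr d kg) in kh.
have Hst : forall i j, i \in D t -> i \notin Sset A Tp g -> i \notin Bset A Tp g ->
    j \in Sset A Tp g -> X t i j = 0.
  move=> i j iD iS iB jS.
  have jI : j \in inner A (clus Tp g).
    by rewrite cg; apply: (subsetP (Sloc_inner A sg)); rewrite -Sg.
  case: (boolP (i \in clus Tp g)) => iC; last by apply: (HI t _ i j iC jI); rewrite leqnn lt.
  have iI : i \in inner A (cset sg) by rewrite in_setD -Bg iB -cg iC.
  have [q [s' [e iS']]] := inner_Sloc iI.
  have eh : subt Tp (g ++ q) = Some s' by rewrite subt_cat eg.
  have hin := subt_ord eh.
  have nq : q != [::].
    apply: contraNneq iS => q0; move: e; rewrite q0 subt_nil => -[e].
    by rewrite Sg e.
  have ngh : g != g ++ q.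
    by apply: contra nq => /eqP /(congr1 size); rewrite size_cat -{1}[size g]addn0 => /addnI /esym /size0nil ->.
  have := ordering gin hin (prefix_prefix g q) ngh; rewrite ig => ih.
  move: iD; rewrite inE => /negP; case; apply/in_Et; exists (g ++ q).
    by rewrite in_take_ord hin.
  by rewrite (Sset_eq eh).
have u : submxS (Sset A Tp g) (Sset A Tp g) (X t) \in unitmx.
  exact: pd_unit (pd_sub pdA H1 H2 HZ sSD).
have [P' [H1' H2' HZ']] := inv_step dBS sSD H1 H2 HZ Hst u.
have ED : D t.+1 = D t :\: Sset A Tp g by rewrite Estep // setCU setDE.
have sBD' : Bset A Tp g \subset D t.+1.
  rewrite ED; apply/subsetP => k kB; rewrite in_setD (subsetP sBD k kB) andbT.
  by rewrite (disjointFr dBS kB).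
have IS : Inv t.+1.
  split.
  - by exists P'; rewrite ED Xstep.
  - by move=> i j; rewrite ED Xstep //; exact: HZ'.
  move=> v /andP [ltv vs] i j iC jI.
  have vin : nth [::] ord v \in ord by exact: mem_nth.
  have [sv ev] := ord_subt vin.
  have HIt : X t i j = 0 by apply: (HI v) => //; rewrite (ltnW ltv) vs.
  rewrite Xstep //.
  case/or3P: (rel_subt wfTp eg ev) => [/prefixP [q e]|/prefixP [q e]|d].
  - have ngv : g != nth [::] ord v.
      apply: contraTneq ltv => e'.
      have : index g ord = v by rewrite e' index_uniq // uord.
      by rewrite ig => ->; rewrite ltnn.
    have := ordering gin vin (_ : prefix g (nth [::] ord v)) ngv; rewrite e prefix_prefix.
    move/(_ isT); rewrite -e ig index_uniq // ?uord // => lt2.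
    by have := ltn_trans lt2 ltv; rewrite ltnn.
  - move: eg; rewrite e subt_cat ev /= => eg'.
    have ss := sub_subt (wf_subt wfTp ev) eg'.
    rewrite (Y_rowB _ dBS) // Bg.
    apply: contra iC => iB; rewrite (clus_eq ev).
    exact: subsetP ss i (subsetP (bnd_sub A (cset sg)) i iB).
  - rewrite (Y_colS dBS) // => k kS.
    apply: (HI v); first by rewrite (ltnW ltv) vs.
      rewrite (clus_eq ev) (disjointFr d) //.
      by apply: (subsetP (subset_trans (Sloc_inner A sg) (inner_sub A _))); rewrite -Sg.
    by [].
split => //.
case: IS => [[P2 [K1 K2]] KZ _].
rewrite /Ug -/(UgE _ _ _) (Ug_Y _ dBS) -Xstep //.
exact: pd_sub pdA K1 K2 KZ sBD'.
Qed.

End StepT.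

Lemma inv_all t : (t <= size ord)%N -> Inv t.
Proof.
elim: t => [|t IH] lt; first exact: inv0.
exact: (step_all lt (IH (ltnW lt))).1.
Qed.

End Main.

Theorem mainTheorem2 (R : realFieldType) (n : nat) (A : 'M[R]_n)
  (T : ctree n) (p : seq bool) (Tp : ctree n) (ord : seq (seq bool)) (t : nat) :
  symmetric_mx A -> posdef_mx A ->
  cluster_tree T ->
  augmented_tree T p = Some Tp ->
  consistent_ordering Tp ord ->
  (t < size ord)%N ->
  posdef_mx (Ug A Tp (nth [::] ord t) (Acur A Tp ord t)).
Proof.
move=> sA pA [cT wT] aug co lt.
have wTp : ctree_wf Tp := augT_wf (O := None) wT cT aug.
exact: (step_all pA wTp co lt (inv_all sA pA wTp co (ltnW lt))).2.
Qed.
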